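(* Let $K\ge L\ge T\ge 2$, let $x$ be a positive integer coprime to $q$, and let $\mathrm{CAT}_x(K,L,T)$ be as in the context. Then $|\mathcal{TR}\cap\mathcal{BR}|=2\bar T-\kappa$ and $|\mathcal{BL}\cap\mathcal{BR}|=2\bar T-\lambda$.
   Context: Let $\kappa,\lambda$ be the smallest non-negative integers such that $K+1+\kappa$ and $L+1+\lambda$ are coprime to $T-1$; $K^\star=K+1+\kappa$, $L^\star=L+1+\lambda$, $\bar T=T-1$, $q=K^\star L^\star+\bar T^2$. For $x$ coprime to $q$, $y\in\{0,\dots,q-1\}$ is the unique integer with $x\bar T+yK^\star\equiv0\pmod q$. $\mathrm{CAT}_x(K,L,T)$ consists of $q$ and the vectors over $\mathbb{Z}_q$: $\boldsymbol{\alpha}^{(p)}=(ky)_{k=0}^{K-1}$, $\boldsymbol{\alpha}^{(s)}=(Ky+kx)_{k=0}^{T-1}$, $\boldsymbol{\beta}^{(p)}=(kx)_{k=0}^{L-1}$, $\boldsymbol{\beta}^{(s)}=(ky-x)_{k=0}^{T-1}$, all mod $q$. With $\{\mathbf v\}$ the set of entries and sumsets $\mathcal A+\mathcal B=\{a+b\}$ in $\mathbb{Z}_q$: $\mathcal{TR}=\{\boldsymbol{\alpha}^{(p)}\}+\{\boldsymbol{\beta}^{(s)}\}$, $\mathcal{BL}=\{\boldsymbol{\alpha}^{(s)}\}+\{\boldsymbol{\beta}^{(p)}\}$, $\mathcal{BR}=\{\boldsymbol{\alpha}^{(s)}\}+\{\boldsymbol{\beta}^{(s)}\}$. *)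

(* Defs.v *)
From mathcomp Require Import all_boot.
Set Implicit Arguments. Unset Strict Implicit. Unset Printing Implicit Defensive.

(* All elements of Z_q are represented by their canonical representatives
   0..q-1 (natural numbers reduced mod q). *)

Definition is_least_coprime_shift (a m k : nat) : bool :=
  coprime (a + k) m && all (fun j => ~~ coprime (a + j) m) (iota 0 k).

Definition Kstar (K kappa : nat) := K + 1 + kappa.
Definition Lstar (L lambda : nat) := L + 1 + lambda.
Definition Tbar (T : nat) := T - 1.
Definition qCAT (K L T kappa lambda : nat) :=
  Kstar K kappa * Lstar L lambda + Tbar T ^ 2.

Definition alpha_p (q K y : nat) : seq nat := [seq (k * y) %% q | k <- iota 0 K].
Definition alpha_s (q K T x y : nat) : seq nat :=
  [seq (K * y + k * x) %% q | k <- iota 0 T].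
Definition beta_p (q L x : nat) : seq nat := [seq (k * x) %% q | k <- iota 0 L].
(* (k*y - x) mod q, computed without truncated subtraction *)
Definition beta_s (q T x y : nat) : seq nat :=
  [seq (k * y + (q - x %% q)) %% q | k <- iota 0 T].

Definition sumset (q : nat) (A B : seq nat) : seq nat :=
  [seq (a + b) %% q | a <- A, b <- B].

Definition card_inter (A B : seq nat) : nat := size (undup [seq z <- A | z \in B]).

(* Main.v *)
From Stdlib Require Import ZArith Lia.
Open Scope Z_scope.

Lemma zero_of_small (q e v : Z) : 0 < q -> v = e * q -> -q < v < q -> v = 0.
Proof. intros Hq -> Hb. assert (e = 0) by nia. subst; lia. Qed.

Lemma core1 (a b t K x y q h c d k : Z) :
  q = a*b + t*t -> 0 < t -> t <= b -> K < a -> t <= K ->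
  Z.gcd t a = 1 -> Z.gcd q x = 1 ->
  a*y + t*x = h*q -> d*y - k*x = c*q ->
  -(K+t) <= d <= t-1 -> 0 <= k <= t ->
  (d = 0 /\ k = 0) \/ (d = -a /\ k = t).
Proof.
  intros Hq Ht Htb HKa HtK Hta Hqx Hh Hc Hd Hk.
  assert (Hdv : (q | x * (d*t + k*a))).
  { exists (d*h - a*c).
    assert (E: a*(d*y - k*x) = a*(c*q)) by (rewrite Hc; ring).
    assert (E2: d*(a*y) = d*(h*q - t*x)) by (f_equal; lia).
    nia. }
  apply Z.gauss in Hdv; [|exact Hqx].
  destruct Hdv as [e He].
  assert (Hq0 : 0 < q) by nia.
  assert (Z0 : d*t + k*a = 0).
  { apply (zero_of_small q e); auto. subst q. split; nia. }
  assert (Htk : (t | a * k)) by (exists (-d); lia).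
  apply Z.gauss in Htk; [|exact Hta].
  destruct Htk as [f Hf]. subst k.
  assert (f = 0 \/ f = 1) by nia.
  destruct H; subst f.
  - left. split; [nia|lia].
  - right. split; [nia|lia].
Qed.

Lemma tyb (a b t x y q h : Z) :
  q = a*b + t*t -> Z.gcd q a = 1 -> a*y + t*x = h*q ->
  exists g, t*y - b*x = g*q.
Proof.
  intros Hq Hqa Hh.
  assert (Hdv : (q | a * (t*y - b*x))).
  { exists (t*h - x). assert (E: t*(a*y) = t*(h*q - t*x)) by (f_equal; lia). nia. }
  apply Z.gauss in Hdv; [|exact Hqa].
  destruct Hdv as [g Hg]. exists g. lia.
Qed.

Lemma core2 (a b t L x y q g c d k : Z) :
  q = a*b + t*t -> 0 < t -> t < b -> t < a -> 0 <= L < b ->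
  Z.gcd t b = 1 -> Z.gcd q x = 1 ->
  t*y - b*x = g*q -> d*y - k*x = c*q ->
  0 <= d <= t -> -(t-1) <= k <= L+t ->
  (d = 0 /\ k = 0) \/ (d = t /\ k = b).
Proof.
  intros Hq Ht Htb Hta HL Hgb Hqx Hg Hc Hd Hk.
  assert (Hdv : (q | x * (d*b - k*t))).
  { exists (t*c - d*g).
    assert (E: t*(d*y - k*x) = t*(c*q)) by (rewrite Hc; ring).
    assert (E2: d*(t*y) = d*(g*q + b*x)) by (f_equal; lia).
    nia. }
  apply Z.gauss in Hdv; [|exact Hqx].
  destruct Hdv as [e He].
  assert (Hq0 : 0 < q) by nia.
  assert (Z0 : d*b - k*t = 0).
  { apply (zero_of_small q e); auto. subst q. split; nia. }
  assert (Htk : (t | b * d)) by (exists k; lia).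
  apply Z.gauss in Htk; [|exact Hgb].
  destruct Htk as [f Hf]. subst d.
  assert (f = 0 \/ f = 1) by nia.
  destruct H; subst f.
  - left. split; [lia|nia].
  - right. split; [lia|nia].
Qed.

Lemma le_mul1 (u v : Z) : 1 <= u -> 0 <= v -> v <= u*v.
Proof. intros; nia. Qed.

Lemma inj_x (x q n n' c : Z) : Z.gcd q x = 1 -> 0 <= n < q -> 0 <= n' < q ->
  (n - n') * x = c * q -> n = n'.
Proof.
  intros Hqx Hn Hn' Hc.
  assert (Hdv : (q | x * (n - n'))) by (exists c; lia).
  apply Z.gauss in Hdv; [|exact Hqx].
  destruct Hdv as [e He].
  assert (n - n' = 0) by (apply (zero_of_small q e); lia). lia.
Qed.
Close Scope Z_scope.
Require Import Defs.
From mathcomp Require Import all_boot zify.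

Lemma modeqZ (q u v : nat) : 0 < q ->
  u %% q = v %% q <-> exists c : Z, (Z.of_nat u - Z.of_nat v = c * Z.of_nat q)%Z.
Proof.
  move=> q0; split.
  - move=> E. exists (Z.of_nat (u %/ q) - Z.of_nat (v %/ q))%Z.
    have Hu := divn_eq u q. have Hv := divn_eq v q. lia.
  - move=> [c Hc].
    have Hu := divn_eq u q. have Hv := divn_eq v q.
    have Ru := ltn_pmod u q0. have Rv := ltn_pmod v q0.
    set ru := u %% q in Hu Ru *. set rv := v %% q in Hv Rv *.
    set du := u %/ q in Hu. set dv := v %/ q in Hv.
    have : (Z.of_nat ru - Z.of_nat rv = (c + Z.of_nat dv - Z.of_nat du) * Z.of_nat q)%Z by lia.
    move=> E. have : (c + Z.of_nat dv - Z.of_nat du = 0)%Z by nia. lia.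
Qed.

Lemma mem_sumset q (f g : nat -> nat) n m z :
  (z \in sumset q [seq f i | i <- iota 0 n] [seq g j | j <- iota 0 m]) =
  [exists i : 'I_n, exists j : 'I_m, z == (f i + g j) %% q].
Proof.
  apply/allpairsP/existsP.
  - case=> [[a b]] /= [/mapP [i Hi ->] /mapP [j Hj ->] ->].
    rewrite mem_iota in Hi; rewrite mem_iota in Hj.
    have Hi' : i < n by lia. have Hj' : j < m by lia.
    exists (Ordinal Hi'); apply/existsP; exists (Ordinal Hj'); by [].
  - case=> i /existsP [j /eqP ->].
    have := ltn_ord i; have := ltn_ord j => ? ?.
    exists (f i, g j) => /=; split => //; apply/map_f; rewrite mem_iota /=; lia.
Qed.

Lemma card_inter_eq (A B E : seq nat) : uniq E ->
  (forall z, (z \in A) && (z \in B) = (z \in E)) -> card_inter A B = size E.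
Proof.
  move=> uE HE. rewrite /card_inter. apply: perm_size. apply: uniq_perm.
  - exact: undup_uniq.
  - exact: uE.
  - move=> z. by rewrite mem_undup mem_filter andbC HE.
Qed.

Lemma kappa_lt (K t k : nat) : 0 < t -> is_least_coprime_shift (K + 1) t k ->
  coprime (K + 1 + k) t /\ k < t.
Proof.
  move=> t0 /andP [Hc Hall]; split => //.
  rewrite ltnNge; apply/negP => Hkt.
  set j0 := (t - K %% t) %% t.
  have j0t : j0 < t by apply: ltn_pmod.
  have : j0 \in iota 0 k by rewrite mem_iota /=; lia.
  move/(allP Hall) => /= /negP; apply.
  have HK := divn_eq K t.
  have Hr := ltn_pmod K t0.
  have : K + 1 + j0 = 1 + (if K %% t == 0 then K %/ t else (K %/ t).+1) * t.
    rewrite /j0. case: eqP => Hz.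
      by rewrite Hz subn0 modnn; lia.
    rewrite modn_small; last lia.
    lia.
  move=> ->. by rewrite -coprime_modl addnC modnMDl coprime_modl coprime1n.
Qed.

Lemma mem_sumsetP q (f g : nat -> nat) n m z :
  reflect (exists i j, [/\ i < n, j < m & z = (f i + g j) %% q])
   (z \in sumset q [seq f i | i <- iota 0 n] [seq g j | j <- iota 0 m]).
Proof.
  rewrite mem_sumset; apply: (iffP idP).
  - case/existsP=> i /existsP [j /eqP ->]; exists i, j; split => //.
  - case=> i [j [Hi Hj ->]]; apply/existsP; exists (Ordinal Hi); apply/existsP;
    by exists (Ordinal Hj).
Qed.

Theorem lemma7 (K L T x y kappa lambda : nat) :
  2 <= T -> T <= L -> L <= K ->
  is_least_coprime_shift (K + 1) (T - 1) kappa ->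
  is_least_coprime_shift (L + 1) (T - 1) lambda ->
  let q := qCAT K L T kappa lambda in
  0 < x -> coprime x q ->
  y < q -> (x * Tbar T + y * Kstar K kappa) %% q = 0 ->
  let TR := sumset q (alpha_p q K y) (beta_s q T x y) in
  let BL := sumset q (alpha_s q K T x y) (beta_p q L x) in
  let BR := sumset q (alpha_s q K T x y) (beta_s q T x y) in
  card_inter TR BR = 2 * Tbar T - kappa /\
  card_inter BL BR = 2 * Tbar T - lambda.
Proof.
  move=> HT HTL HLK Hka Hla q x0 Hxq Hyq Hmod TR BL BR.
  have t0 : 0 < T - 1 by lia.
  have [Hca Hkt] := @kappa_lt K _ _ t0 Hka.
  have [Hcb Hlt] := @kappa_lt L _ _ t0 Hla.
  rewrite /TR /BL /BR /alpha_p /alpha_s /beta_p /beta_s /Tbar.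
  rewrite /Tbar /Kstar in Hmod.
  have Hq : q = (K + 1 + kappa) * (L + 1 + lambda) + (T - 1) * (T - 1).
    by rewrite /q /qCAT /Kstar /Lstar /Tbar; lia.
  clearbody q.
  set t := T - 1 in Hca Hkt Hcb Hlt Hmod Hq t0 *.
  have HTt : T = t + 1 by rewrite /t; lia.
  clearbody t. subst T.
  have q0 : 0 < q by lia.
  have Zqx : Z.gcd (Z.of_nat q) (Z.of_nat x) = 1%Z.
    by move: Hxq; rewrite coprime_sym => /eqP; lia.
  have Zta : Z.gcd (Z.of_nat t) (Z.of_nat (K + 1 + kappa)) = 1%Z.
    by move: Hca; rewrite coprime_sym; move: (K + 1 + kappa) => a' /eqP; lia.
  have Ztb : Z.gcd (Z.of_nat t) (Z.of_nat (L + 1 + lambda)) = 1%Z.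
    by move: Hcb; rewrite coprime_sym; move: (L + 1 + lambda) => a' /eqP; lia.
  have Zqa : Z.gcd (Z.of_nat q) (Z.of_nat (K + 1 + kappa)) = 1%Z.
    have : coprime (K + 1 + kappa) q.
      rewrite /coprime Hq (mulnC (K + 1 + kappa)) gcdnMDl mulnn -/(coprime _ (t ^ 2)).
      by rewrite coprime_pexpr.
    by rewrite coprime_sym; move: (K + 1 + kappa) => a' /eqP; lia.
  have [h Hh] : exists h : Z, (Z.of_nat (K + 1 + kappa) * Z.of_nat y + Z.of_nat t * Z.of_nat x
                  = h * Z.of_nat q)%Z.
    have : (x * t + y * (K + 1 + kappa)) %% q = 0 %% q by rewrite Hmod mod0n.
    move/(@modeqZ q _ _ q0) => [h Hh]; exists h; lia.
  have HqZ : Z.of_nat q = (Z.of_nat (K + 1 + kappa) * Z.of_nat (L + 1 + lambda)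
                           + Z.of_nat t * Z.of_nat t)%Z by lia.
  have [g Hg] := @tyb _ _ _ _ _ _ _ HqZ Zqa Hh.
  set s := q - x %% q.
  have Hs : (Z.of_nat x + Z.of_nat s = (Z.of_nat (x %/ q) + 1) * Z.of_nat q)%Z.
    have := divn_eq x q. have := ltn_pmod x q0. rewrite /s. lia.
  clearbody s.
  split.
  - apply: (etrans (@card_inter_eq _ _ [seq (m * y + s) %% q | m <- iota 0 (t - kappa) ++ iota K t] _ _)).
    + rewrite map_inj_in_uniq.
        rewrite cat_uniq !iota_uniq /= andbT.
        by apply/hasPn => m; rewrite !mem_iota => Hm; lia.
      move=> m m'; rewrite !mem_cat !mem_iota => Hm Hm' E.
      move/(@modeqZ q _ _ q0): E => [c Hc].
      case: (leqP m m') => Hmm.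
        have C : (Z.of_nat m - Z.of_nat m' = 0 /\ 0 = 0)%Z \/
                 (Z.of_nat m - Z.of_nat m' = - Z.of_nat (K + 1 + kappa) /\ 0 = Z.of_nat t)%Z.
          apply: (@core1 (Z.of_nat (K + 1 + kappa)) (Z.of_nat (L + 1 + lambda)) (Z.of_nat t) (Z.of_nat K) (Z.of_nat x) (Z.of_nat y) (Z.of_nat q) h c) => //; lia.
        lia.
      have C : (Z.of_nat m' - Z.of_nat m = 0 /\ 0 = 0)%Z \/
               (Z.of_nat m' - Z.of_nat m = - Z.of_nat (K + 1 + kappa) /\ 0 = Z.of_nat t)%Z.
        apply: (@core1 (Z.of_nat (K + 1 + kappa)) (Z.of_nat (L + 1 + lambda)) (Z.of_nat t) (Z.of_nat K) (Z.of_nat x) (Z.of_nat y) (Z.of_nat q) h (- c)) => //; lia.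
      lia.
    + move=> z; apply/andP/mapP.
      * case=> /mem_sumsetP [k1 [j1 [Hk1 Hj1 E1]]] /mem_sumsetP [k2 [j2 [Hk2 Hj2 E2]]].
        rewrite modnDm in E1; rewrite modnDm in E2.
        have := etrans (esym E1) E2.
        move/(@modeqZ q _ _ q0) => [c Hc].
        have C : (Z.of_nat k1 + Z.of_nat j1 - Z.of_nat K - Z.of_nat j2 = 0 /\ Z.of_nat k2 = 0)%Z \/
                 (Z.of_nat k1 + Z.of_nat j1 - Z.of_nat K - Z.of_nat j2 = - Z.of_nat (K + 1 + kappa)
                    /\ Z.of_nat k2 = Z.of_nat t)%Z.
          apply: (@core1 (Z.of_nat (K + 1 + kappa)) (Z.of_nat (L + 1 + lambda)) (Z.of_nat t) (Z.of_nat K) (Z.of_nat x) (Z.of_nat y) (Z.of_nat q) h c) => //; lia.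
        exists (k1 + j1).
          rewrite mem_cat !mem_iota; lia.
        by rewrite E1 mulnDl addnA.
      * case=> m Hm ->; rewrite mem_cat !mem_iota in Hm; split; apply/mem_sumsetP.
          case: (ltnP m K) => HmK.
            exists m, 0; split => //; first lia.
            by rewrite modnDm mul0n add0n.
          exists (K - 1), (m - K + 1); split; [lia|lia|].
          rewrite modnDm addnA -mulnDl; congr ((_ * y + s) %% q); lia.
        case: (ltnP m K) => HmK.
          exists t, (m + 1 + kappa); split; [lia|lia|].
          rewrite modnDm; apply/(@modeqZ q _ _ q0); exists (- h)%Z; lia.
        exists 0, (m - K); split; [lia|lia|].
          rewrite modnDm; congr (_ %% q); rewrite mul0n addn0 addnA -mulnDl; congr (_ * y + s); lia.
    + rewrite size_map size_cat !size_iota; lia.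
  - apply: (etrans (@card_inter_eq _ _ [seq (K * y + n * x) %% q | n <- iota 0 t ++ iota (L + lambda) (t - lambda)] _ _)).
    + rewrite map_inj_in_uniq.
        rewrite cat_uniq !iota_uniq /= andbT.
        by apply/hasPn => m; rewrite !mem_iota => Hm; lia.
      move=> m m'; rewrite !mem_cat !mem_iota => Hm Hm' E.
      move/(@modeqZ q _ _ q0): E => [c Hc].
      have : Z.of_nat m = Z.of_nat m'.
        have qb : (Z.of_nat L + Z.of_nat t < Z.of_nat q)%Z.
          rewrite HqZ. have : (Z.of_nat L + Z.of_nat t < Z.of_nat (K + 1 + kappa) * Z.of_nat (L + 1 + lambda))%Z.
            have : (Z.of_nat (L + 1 + lambda) <= Z.of_nat (K + 1 + kappa) * Z.of_nat (L + 1 + lambda))%Z.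
              apply: le_mul1; lia.
            lia.
          have : (0 <= Z.of_nat t * Z.of_nat t)%Z by lia.
          lia.
        apply: (@inj_x (Z.of_nat x) (Z.of_nat q) _ _ c) => //; lia.
      lia.
    + move=> z; apply/andP/mapP.
      * case=> /mem_sumsetP [k1 [j1 [Hk1 Hj1 E1]]] /mem_sumsetP [k2 [j2 [Hk2 Hj2 E2]]].
        rewrite modnDm in E1; rewrite modnDm in E2.
        have := etrans (esym E1) E2.
        move/(@modeqZ q _ _ q0) => [c Hc].
        have C : (Z.of_nat j2 = 0 /\ Z.of_nat k1 + Z.of_nat j1 + 1 - Z.of_nat k2 = 0)%Z \/
                 (Z.of_nat j2 = Z.of_nat t /\
                  Z.of_nat k1 + Z.of_nat j1 + 1 - Z.of_nat k2 = Z.of_nat (L + 1 + lambda))%Z.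
          apply: (@core2 (Z.of_nat (K + 1 + kappa)) (Z.of_nat (L + 1 + lambda)) (Z.of_nat t)
                    (Z.of_nat L) (Z.of_nat x) (Z.of_nat y) (Z.of_nat q) g
                    (- c - (Z.of_nat (x %/ q) + 1))%Z) => //; lia.
        exists (k1 + j1).
          rewrite mem_cat !mem_iota; lia.
        by rewrite E1 mulnDl addnA.
      * case=> n Hn ->; rewrite mem_cat !mem_iota in Hn; split; apply/mem_sumsetP.
          case: (ltnP n t) => Hnt.
            exists n, 0; split; [lia|lia|].
            by rewrite modnDm mul0n addn0.
          exists (n - (L - 1)), (L - 1); split; [lia|lia|].
          rewrite modnDm -addnA -mulnDl; congr ((K * y + _ * x) %% q); lia.
        case: (ltnP n t) => Hnt.
          exists (n + 1), 0; split; [lia|lia|].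
          rewrite modnDm; apply/(@modeqZ q _ _ q0); exists (- (Z.of_nat (x %/ q) + 1))%Z; lia.
        have [k2 Ek2] : exists k2, n = L + lambda + k2 by exists (n - (L + lambda)); lia.
        rewrite Ek2 in Hn Hnt *.
        exists k2, t; split; [lia|lia|].
        rewrite modnDm; apply/(@modeqZ q _ _ q0); exists (- g - (Z.of_nat (x %/ q) + 1))%Z; lia.
    + rewrite size_map size_cat !size_iota; lia.
Qed.
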